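(* Let $G$ be a simple undirected graph (no loops, no multiple edges) with vertex set $\{v_1,\dots,v_n\}$ and $m$ edges, and let $\tau(G;x)=d_2(xI_n-A(G))$, where $A(G)$ is the adjacency matrix of $G$. Then $$(m-n)\,\tau(G;x)+x\,\tau'(G;x)=\sum_{v_sv_t\in E(G)}\big[\tau(G-v_sv_t;x)+\tau(G-v_s-v_t;x)\big],$$ where $\tau'$ is the derivative with respect to $x$, $G-v_sv_t$ is $G$ with the edge $v_sv_t$ deleted, and $G-v_s-v_t$ is $G$ with the vertices $v_s,v_t$ deleted (so $\tau(G-v_s-v_t;x)=d_2(xI_{n-2}-A(G-v_s-v_t))$).
   Context: For an $k\times k$ matrix $M=(m_{ij})$ ($k\ge 2$), the second immanant is $d_2(M)=\sum_{\sigma\in S_k}\chi_2(\sigma)\prod_{s=1}^k m_{s\sigma(s)}$, where $\chi_2$ is the irreducible character of $S_k$ corresponding to the partition $(2,1^{k-2})$. It satisfies $d_2(X)=\sum_{i=1}^k x_{ii}\det(X(i))-\det(X)$, where $X(i)$ is $X$ with row and column $i$ deleted; for matrices of order less than $2$, $d_2$ is understood via this identity, with the determinant of the empty matrix equal to $1$. *)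

(* Defs.v *)
From HB Require Import structures.
From mathcomp Require Import all_boot all_order all_algebra all_fingroup.
Set Implicit Arguments. Unset Strict Implicit. Unset Printing Implicit Defensive.
Import GRing.Theory.
Local Open Scope ring_scope.

(* chi_2(sigma) for the partition (2,1^{k-2}) of k:
   chi_2 = sign * (standard character) = sgn(sigma) * (#fix(sigma) - 1).
   For k = 0, 1 this formula reproduces the convention
   d_2(X) = sum_i x_ii det X(i) - det X  (giving -1 and 0 resp.). *)
Definition chi2 (k : nat) (s : 'S_k) : int :=
  (-1) ^+ s * ((#|[set i | s i == i]|)%:Z - 1).

Definition d2 (R : comNzRingType) (k : nat) (M : 'M[R]_k) : R :=
  \sum_(s : 'S_k) (chi2 s)%:~R * \prod_(i < k) M i (s i).

Definition adj (n : nat) (e : rel 'I_n) : 'M[int]_n :=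
  \matrix_(i, j) (e i j)%:R.

Definition tau (n : nat) (A : 'M[int]_n) : {poly int} :=
  d2 ('X%:M - map_mx polyC A).

Definition edel (n : nat) (e : rel 'I_n) (s t : 'I_n) : rel 'I_n :=
  fun i j => e i j && ~~ (((i == s) && (j == t)) || ((i == t) && (j == s))).

Definition vrest (n : nat) (s t : 'I_n) : {set 'I_n} :=
  [set i | (i != s) && (i != t)].

Definition vdel_adj (n : nat) (e : rel 'I_n) (s t : 'I_n)
  : 'M[int]_#|vrest s t| :=
  \matrix_(i, j) (e (enum_val i) (enum_val j))%:R.

Definition nedges (n : nat) (e : rel 'I_n) : nat :=
  #|[set p : 'I_n * 'I_n | (p.1 < p.2)%N && e p.1 p.2]|.

(* Main.v *)
Require Import Defs.
From HB Require Import structures.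
From mathcomp Require Import all_boot all_order all_algebra all_fingroup.
From mathcomp Require Import ring.
Import GRing.Theory.
Local Open Scope ring_scope.

Definition Mx {n} (e : rel 'I_n) : 'M[{poly int}]_n := 'X%:M - map_mx polyC (adj e).
Definition term {n} (e : rel 'I_n) (s : 'S_n) : {poly int} := \prod_i Mx e i (s i).

Lemma MxE n (e : rel 'I_n) i j : Mx e i j = 'X *+ (i == j) - ((e i j)%:R : int)%:P.
Proof. by rewrite /Mx !mxE. Qed.

Lemma tau_sum n (e : rel 'I_n) : tau (adj e) = \sum_(s : 'S_n) (chi2 s)%:~R * term e s.
Proof. by []. Qed.

Lemma term_fact n (e : rel 'I_n) (s : 'S_n) : irreflexive e ->
  term e s = 'X ^+ #|[set i | s i == i]| * (\prod_(i | s i != i) (- ((e i (s i))%:R : int)))%:P.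
Proof.
move=> irr; rewrite /term (bigID (fun i => s i == i)) /=; congr (_ * _).
  rewrite -prodr_const; apply: eq_big => i; first by rewrite inE.
  by move=> /eqP h; rewrite MxE h eqxx irr subr0.
rewrite rmorph_prod; apply: eq_bigr => i h; rewrite MxE eq_sym (negPf h) /=.
by rewrite sub0r rmorphN.
Qed.

Lemma derX (c : int) k : 'X * (('X ^+ k) * c%:P)^`() = k%:R * (('X ^+ k) * c%:P).
Proof.
rewrite derivM derivC mulr0 addr0 derivXn; case: k => [|k]; first by rewrite !mulr0n mul0r mulr0 mul0r.
by rewrite exprS -mulr_natl /=; ring.
Qed.

Lemma term_edge n (e : rel 'I_n) (s : 'S_n) : term e s != 0 -> forall i, s i != i -> e i (s i).
Proof.
move=> nz i si; apply/negPn/negP => ne; move/eqP: nz; apply.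
by rewrite /term (bigD1 i) //= MxE eq_sym (negPf si) (negPf ne) /= subr0 mul0r.
Qed.

Lemma count_edges n (e : rel 'I_n) (s : 'S_n) : symmetric e -> (forall i, s i != i -> e i (s i)) ->
  (\sum_(p : 'I_n * 'I_n | (p.1 < p.2)%N && e p.1 p.2) ((s p.1 == p.2) + (s p.2 == p.1)))%N
   = #|[set i | s i != i]|.
Proof.
move=> sym he; rewrite big_split /=.
have E1 : (\sum_(p : 'I_n * 'I_n | (p.1 < p.2)%N && e p.1 p.2) (s p.1 == p.2)
   = \sum_(p : 'I_n * 'I_n | (p.1 < p.2)%N) (s p.1 == p.2))%N.
  rewrite big_mkcond [RHS]big_mkcond; apply: eq_bigr => p _.
  case: ltnP => //= lt; case: (boolP (s p.1 == p.2)) => [/eqP h|]; last by case: (e _ _).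
  rewrite -h he // h; apply/eqP => h2.
  by move: lt; rewrite -h2 ltnn.
have E2 : (\sum_(p : 'I_n * 'I_n | (p.1 < p.2)%N && e p.1 p.2) (s p.2 == p.1)
   = \sum_(p : 'I_n * 'I_n | (p.2 < p.1)%N) (s p.1 == p.2))%N.
  have sw : involutive (fun p : 'I_n * 'I_n => (p.2, p.1)) by case.
  rewrite (reindex_inj (inv_inj sw)) /=.
  rewrite big_mkcond [RHS]big_mkcond; apply: eq_bigr => p _.
  case: ltnP => //= lt; case: (boolP (s p.1 == p.2)) => [/eqP h|]; last by case: (e _ _).
  rewrite sym -h he // h; apply/eqP => h2.
  by move: lt; rewrite -h2 ltnn.
rewrite E1 E2 (big_mkcond (fun p : 'I_n * 'I_n => (p.1 < p.2)%N))
  (big_mkcond (fun p : 'I_n * 'I_n => (p.2 < p.1)%N)) -big_split /=.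
rewrite -sum1_card.
transitivity (\sum_(i : 'I_n) \sum_(j : 'I_n) (if i != j then (s i == j : nat) else 0%N))%N.
  rewrite pair_bigA /=; apply: eq_bigr => -[i j] _ /=.
  case: ltngtP => h /=.
  - by rewrite ?addn0 ifT //; apply/eqP => ee; rewrite ee ltnn in h.
  - by rewrite ?addn0 ifT //; apply/eqP => ee; rewrite ee ltnn in h.
  - by rewrite ifF //; apply/eqP/val_inj.
rewrite [RHS]big_mkcond; apply: eq_bigr => i _; rewrite inE (bigD1 (s i)) //= big1 ?addn0.
  by rewrite eqxx eq_sym; case: (s i != i).
by move=> j; rewrite eq_sym => /negPf ->; case: (_ != _).
Qed.

Lemma term_edel n (e : rel 'I_n) (a b : 'I_n) (s : 'S_n) : a != b ->
  term (edel e a b) s = term e s * (~~ ((s a == b) || (s b == a)))%:R.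
Proof.
move=> ab; have [h|h] := boolP ((s a == b) || (s b == a)).
  rewrite mulr0; case/orP: h => /eqP h.
    by rewrite /term (bigD1 a) //= MxE h (negPf ab) /edel !eqxx /= andbF subr0 mul0r.
  rewrite /term (bigD1 b) //= MxE h eq_sym (negPf ab) /edel !eqxx /= orbT andbF subr0 mul0r //.
rewrite mulr1; apply: eq_bigr => i _; rewrite !MxE /edel.
have -> : ((i == a) && (s i == b)) || ((i == b) && (s i == a)) = false.
  apply/negbTE; move: h; apply: contra; case/orP => /andP[/eqP -> ->]; by rewrite ?orbT.
by rewrite andbT.
Qed.

Lemma tau_edel n (e : rel 'I_n) (a b : 'I_n) : a != b ->
  tau (adj (edel e a b)) = \sum_(s : 'S_n) (chi2 s)%:~R * term e s * (~~ ((s a == b) || (s b == a)))%:R.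
Proof. by move=> ab; rewrite tau_sum; apply: eq_bigr => s _; rewrite term_edel // mulrA. Qed.

Section VDel.
Definition ev {n} {a b : 'I_n} (j : 'I_#|vrest a b|) : 'I_n := enum_val j.

Lemma ev_inj n (a b : 'I_n) : injective (@ev n a b).
Proof. exact: enum_val_inj. Qed.

Lemma evD n (a b : 'I_n) (j : 'I_#|vrest a b|) : (ev j != a) && (ev j != b).
Proof. by have := enum_valP j; rewrite inE. Qed.

Lemma inD_ev n (a b : 'I_n) i : i \in vrest a b -> exists j, i = @ev n a b j.
Proof. by move=> iD; exists (enum_rank_in iD i); rewrite /ev enum_rankK_in. Qed.

Definition hfun {n} {a b : 'I_n} (sg : 'S_#|vrest a b|) (i : 'I_n) : 'I_n :=
  if [pick j : 'I_#|vrest a b| | ev j == i] is Some j then ev (sg j) else i.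

Lemma hfun_ev n (a b : 'I_n) (sg : 'S_#|vrest a b|) (j : 'I_#|vrest a b|) : hfun sg (ev j) = ev (sg j).
Proof.
rewrite /hfun; case: pickP => [j' /eqP /ev_inj -> //|/(_ j)]; by rewrite eqxx.
Qed.

Lemma hfun_out n (a b : 'I_n) (sg : 'S_#|vrest a b|) i : i \notin vrest a b -> hfun sg i = i.
Proof. by rewrite /hfun; case: pickP => // j /eqP <-; rewrite enum_valP. Qed.

Lemma hfun_inj n (a b : 'I_n) (sg : 'S_#|vrest a b|) : injective (@hfun n a b sg).
Proof.
move=> i1 i2.
case: (boolP (i1 \in vrest a b)) => [/inD_ev [j1 ->]| o1];
case: (boolP (i2 \in vrest a b)) => [/inD_ev [j2 ->]| o2]; rewrite ?hfun_ev ?hfun_out //.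
- by move/ev_inj/perm_inj ->.
- by move=> h; move: o2; rewrite -h enum_valP.
- by move=> h; move: o1; rewrite h enum_valP.
Qed.

Definition hperm {n} {a b : 'I_n} sg : 'S_n := perm (@hfun_inj n a b sg).
Definition gperm {n} {a b : 'I_n} sg : 'S_n := (tperm a b * @hperm n a b sg)%g.

Lemma g_ev n (a b : 'I_n) (sg : 'S_#|vrest a b|) (j : 'I_#|vrest a b|) : gperm sg (ev j) = ev (sg j).
Proof.
case/andP: (@evD _ _ _ j) => h1 h2.
by rewrite /gperm permM tpermD 1?eq_sym // permE hfun_ev.
Qed.

Lemma g_a n (a b : 'I_n) (sg : 'S_#|vrest a b|) : gperm sg a = b.
Proof. by rewrite /gperm permM tpermL permE hfun_out // inE eqxx /= ?andbF. Qed.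

Lemma g_b n (a b : 'I_n) (sg : 'S_#|vrest a b|) : gperm sg b = a.
Proof. by rewrite /gperm permM tpermR permE hfun_out // inE eqxx /= ?andbF. Qed.

Lemma odd_h n (a b : 'I_n) (sg : 'S_#|vrest a b|) : odd_perm (@hperm n a b sg) = odd_perm sg.
Proof.
have hM : {morph (@hperm n a b) : x y / (x * y)%g >-> (x * y)%g}.
  move=> x y; apply/permP => i; rewrite permM !permE.
  case: (boolP (i \in vrest a b)) => [/inD_ev [j ->]| o]; rewrite ?hfun_ev ?hfun_out ?permM //.
have h1 : @hperm n a b 1%g = 1%g.
  apply/permP => i; rewrite permE perm1.
  by case: (boolP (i \in vrest a b)) => [/inD_ev [j ->]| o]; rewrite ?hfun_ev ?hfun_out ?perm1.
have hT : forall x y, @hperm n a b (tperm x y) = tperm (ev x) (ev y).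
  move=> x y; apply/permP => i; rewrite permE.
  case: (boolP (i \in vrest a b)) => [/inD_ev [j ->]| o]; rewrite ?hfun_ev ?hfun_out //.
    case: tpermP => [->|->|nx ny]; rewrite ?tpermL ?tpermR // tpermD //.
      by rewrite (inj_eq (@ev_inj n a b)); apply/eqP => ee; apply: nx.
    by rewrite (inj_eq (@ev_inj n a b)); apply/eqP => ee; apply: ny.
  rewrite tpermD //; apply/eqP => ee; move: o; by rewrite -ee enum_valP.
case: (prod_tpermP sg) => ts -> _.
rewrite (big_morph _ hM h1) (big_morph _ (@odd_permM _) (odd_perm1 _)).
rewrite (big_morph _ (@odd_permM _) (odd_perm1 _)).
by apply: eq_bigr => t _; rewrite hT !odd_tperm (inj_eq (@ev_inj n a b)).
Qed.

End VDel.

Lemma fix_g n (a b : 'I_n) (sg : 'S_#|vrest a b|) : a != b ->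
  #|[set i | gperm sg i == i]| = #|[set j | sg j == j]|.
Proof.
move=> ab.
have -> : [set i | gperm sg i == i] = [set ev x | x in [set j | sg j == j]].
  apply/setP => i; rewrite inE.
  case: (boolP (i \in vrest a b)) => [/inD_ev [j ->]| o].
    by rewrite g_ev (inj_eq (@ev_inj n a b)) mem_imset ?inE //; exact: ev_inj.
  have nim : i \notin [set ev x | x in [set j | sg j == j]].
    apply/imsetP => -[j _ ee]; move: o; by rewrite ee enum_valP.
  rewrite (negPf nim); move: o; rewrite inE negb_and !negbK => /orP[]/eqP ->.
    by rewrite g_a eq_sym (negPf ab).
  by rewrite g_b (negPf ab).
by rewrite card_imset //; exact: ev_inj.
Qed.

Lemma chi2_g n (a b : 'I_n) (sg : 'S_#|vrest a b|) : a != b ->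
  chi2 (gperm sg) = - chi2 sg.
Proof.
move=> ab; rewrite /chi2 fix_g // /gperm odd_permM odd_tperm ab odd_h.
by case: (odd_perm sg); rewrite /= ?expr0 ?expr1 ?mulN1r ?mul1r ?opprK.
Qed.

Lemma g_inj n (a b : 'I_n) : injective (@gperm n a b).
Proof.
move=> s1 s2 h; apply/permP => j; apply: (@ev_inj n a b); by rewrite -!g_ev h.
Qed.

Lemma g_img n (a b : 'I_n) : a != b ->
  [set s : 'S_n | (s a == b) && (s b == a)] = [set @gperm n a b x | x in [set: 'S_#|vrest a b|]].
Proof.
move=> ab; apply/setP => s; rewrite inE; apply/idP/imsetP.
  case/andP => /eqP sa /eqP sb.
  have sD : forall j : 'I_#|vrest a b|, s (ev j) \in vrest a b.
    move=> j; case/andP: (@evD _ _ _ j) => h1 h2.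
    rewrite inE; apply/andP; split; apply/eqP => h.
      by move: h2; rewrite -(inj_eq (@perm_inj _ s)) h sb eqxx.
    by move: h1; rewrite -(inj_eq (@perm_inj _ s)) h sa eqxx.
  pose f (j : 'I_#|vrest a b|) := odflt j [pick j' : 'I_#|vrest a b| | ev j' == s (ev j)].
  have fE : forall j, ev (f j) = s (ev j).
    move=> j; rewrite /f; case: pickP => [j' /eqP //|].
    move=> H; exfalso; move: (H (enum_rank_in (sD j) (s (ev j)))).
    by rewrite /ev enum_rankK_in ?eqxx //; apply: sD.
  have finj : injective f.
    by move=> j1 j2 /(congr1 ev); rewrite !fE => /perm_inj /ev_inj.
  exists (perm finj); first by rewrite inE.
  apply/permP => i.
  case: (boolP (i \in vrest a b)) => [/inD_ev [j ->]| o].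
    by rewrite g_ev permE fE.
  move: o; rewrite inE negb_and !negbK => /orP[]/eqP ->; by rewrite ?g_a ?g_b.
by case=> sg _ ->; rewrite g_a g_b !eqxx.
Qed.

Lemma term_g n (e : rel 'I_n) (a b : 'I_n) (sg : 'S_#|vrest a b|) : a != b -> e a b -> e b a ->
  term e (gperm sg) = \prod_j ('X%:M - map_mx polyC (vdel_adj e a b)) j (sg j).
Proof.
move=> ab eab eba.
rewrite /term (bigD1 a) //= (bigD1 b) /=; last by rewrite eq_sym.
rewrite g_a g_b !MxE eab eba (negPf ab) eq_sym (negPf ab) /= !sub0r mulrA mulrNN mulr1 mul1r.
rewrite (eq_bigl (fun i => i \in vrest a b)); last by move=> i; rewrite inE.
rewrite big_enum_val; apply: eq_bigr => j _.
by rewrite -[enum_val j]/(ev j) g_ev MxE !mxE /ev (inj_eq enum_val_inj).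
Qed.

Lemma tau_vdel n (e : rel 'I_n) (a b : 'I_n) : a != b -> e a b -> e b a ->
  tau (vdel_adj e a b) = - \sum_(s : 'S_n) (chi2 s)%:~R * term e s * ((s a == b) && (s b == a))%:R.
Proof.
move=> ab eab eba.
have -> : \sum_(s : 'S_n) (chi2 s)%:~R * term e s * ((s a == b) && (s b == a))%:R
   = \sum_(s in [set s : 'S_n | (s a == b) && (s b == a)]) (chi2 s)%:~R * term e s.
  rewrite [RHS]big_mkcond; apply: eq_bigr => s _; rewrite inE.
  by case: (_ && _); rewrite ?mulr1 ?mulr0.
rewrite g_img // big_imset /=; last by move=> x y _ _; apply: g_inj.
rewrite -sumrN /tau /d2; apply: eq_big => sg; first by rewrite inE.
by move=> _; rewrite chi2_g // term_g // mulrNz mulNr opprK.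
Qed.

Theorem lemma2p5 (n : nat) (e : rel 'I_n)
    (e_sym : symmetric e) (e_irr : irreflexive e) :
  ((nedges e)%:Z - n%:Z)%:P * tau (adj e) + 'X * (tau (adj e))^`()
  = \sum_(p : 'I_n * 'I_n | (p.1 < p.2)%N && e p.1 p.2)
      (tau (adj (edel e p.1 p.2)) + tau (vdel_adj e p.1 p.2)).
Proof.
have ab_of : forall p : 'I_n * 'I_n, (p.1 < p.2)%N -> p.1 != p.2.
  by move=> p lt; apply/eqP => ee; rewrite ee ltnn in lt.
rewrite (eq_bigr (fun p : 'I_n * 'I_n => \sum_(s : 'S_n) ((chi2 s)%:~R * term e s *
    ((~~ ((s p.1 == p.2) || (s p.2 == p.1)))%:R) - (chi2 s)%:~R * term e s * ((s p.1 == p.2) && (s p.2 == p.1))%:R))); last first.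
  move=> p /andP[lt ep]; rewrite tau_edel ?ab_of // (@tau_vdel _ _ _ _ (ab_of _ lt) ep); last by rewrite e_sym.
  by rewrite sumrB.
rewrite exchange_big /= tau_sum mulr_sumr linear_sum mulr_sumr -big_split /=.
apply: eq_bigr => s _.
set k := #|[set i | s i == i]|.
set d := \prod_(i | s i != i) (- ((e i (s i))%:R : int)).
have eT : (chi2 s)%:~R * term e s = 'X ^+ k * ((chi2 s) * d)%:P.
  have hc : (chi2 s)%:P = (chi2 s)%:~R :> {poly int} by rewrite -{1}[chi2 s]intz rmorph_int.
  rewrite term_fact // (rmorphM polyC) mulrCA; congr (_ * _); congr (_ * _); exact: (esym hc).
under eq_bigr do rewrite eT -mulrBr.
rewrite eT derX -mulr_sumr.
have [T0|Tnz] := eqVneq ('X ^+ k * ((chi2 s) * d)%:P) 0.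
  by rewrite T0 !mulr0 mul0r addr0.
have nz : term e s != 0.
  by apply: contraNneq Tnz => h; rewrite -eT h mulr0.
have he := @term_edge _ _ _ nz.
have cnt := @count_edges _ _ s e_sym he.
rewrite (eq_bigr (fun p : 'I_n * 'I_n => 1 - (((s p.1 == p.2) + (s p.2 == p.1))%N)%:R)); last first.
  move=> p _; case: (s p.1 == p.2); case: (s p.2 == p.1); rewrite /= ?addn0 ?add0n; ring.
have hm : \sum_(p : 'I_n * 'I_n | (p.1 < p.2)%N && e p.1 p.2) (1 : {poly int}) = (nedges e)%:R.
  by rewrite /nedges -sum1dep_card natr_sum.
rewrite sumrB hm -natr_sum cnt.
have hn : (k + #|[set i | s i != i]|)%N = n.
  rewrite -[in RHS](card_ord n) -(cardsC [set i | s i == i]); congr (_ + _)%N.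
  by apply: eq_card => i; rewrite !inE.
have hP : forall j : nat, (j%:Z)%:P = j%:R :> {poly int}.
  by move=> j; rewrite -polyC_natr natz.
rewrite (rmorphB polyC) [X in X * _ + _](_ : _ = (nedges e)%:R - n%:R); last by congr (_ - _); apply: hP.
rewrite -[in n%:R]hn natrD.
ring.
Qed.
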